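(* For every round $\ell\ge\lceil n/2\rceil$ of Algorithm 2, $$\mathbb{E}\Big[v\big(\{e^{(\ell)}\}\ \big|\ \mathrm{ALG}^{\ge\ell+1}\big)\ \Big|\ L^{\le\ell},\,T^{\ge\ell+1}\Big]\ \ge\ \frac{1}{\ell}\Big(v(M^{(\ell)})-v(T^{\ge\ell+1})\Big),$$ where $\{e^{(\ell)}\}$ is read as $\emptyset$ if there is no tentative edge in round $\ell$.
   Context: Submodular secretary matching setting. Let $G=(L\cup R,E)$ be a bipartite graph with $|L|=n$, and $v\colon 2^E\to\mathbb{R}_{\ge0}$ monotone and submodular; for $S,S'\subseteq E$, $v(S\mid S')=v(S\cup S')-v(S')$. The vertices of $L$ arrive one per round in uniformly random order; on arrival of $u\in L$ its incident edges are revealed; $L^{\le\ell}$ denotes the set of vertices of $L$ arriving in rounds $1,\dots,\ell$. $\mathcal{A}$ is an offline algorithm that for every $L'\subseteq L$ returns a matching $\mathcal{A}(L'\cup R)$ of the subgraph induced by $L'\cup R$ with value at least $\alpha$ times the maximum value of $v$ over matchings of that subgraph ($\alpha\in(0,1]$), depending only on the set $L'$. Algorithm 2: it rejects the vertices arriving in rounds $1,\dots,\lceil n/2\rceil-1$; in each round $\ell\ge\lceil n/2\rceil$ with arriving vertex $u$, it computes $M^{(\ell)}=\mathcal{A}(L^{\le\ell}\cup R)$, lets $e^{(\ell)}$ be the edge incident to $u$ in $M^{(\ell)}$ (the tentative edge; none if $u$ is unmatched), and if $e^{(\ell)}$ exists and the set of accepted edges together with $e^{(\ell)}$ is a matching,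 accepts $e^{(\ell)}$. $T^{\ge\ell}$ is the set of tentative edges of rounds $\ell,\dots,n$, and $\mathrm{ALG}^{\ge\ell}$ is the set of edges accepted in rounds $\ell,\dots,n$. *)

(* Defs.v *)
From HB Require Import structures.
From mathcomp Require Import all_boot all_order all_algebra all_fingroup.
Set Implicit Arguments. Unset Strict Implicit. Unset Printing Implicit Defensive.
Import Order.TTheory GRing.Theory Num.Theory.

(* Bipartite graph G = (L u R, E): L is identified with 'I_n (|L| = n),
   R is an arbitrary finite type, and E : {set 'I_n * R} is the edge set. *)

Section Matchings.
Variables (n : nat) (R : finType) (E : {set 'I_n * R}).

Definition is_matching (M : {set 'I_n * R}) : bool :=
  (M \subset E) &&
  [forall e1 in M, forall e2 in M,
     ((e1.1 == e2.1) || (e1.2 == e2.2)) ==> (e1 == e2)].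

Definition is_matching_in (L' : {set 'I_n}) (M : {set 'I_n * R}) : bool :=
  is_matching M && [forall e in M, e.1 \in L'].
End Matchings.

Definition vmarg (F : numDomainType) (X : finType) (v : {set X} -> F)
  (S S' : {set X}) : F := (v (S :|: S') - v S')%R.

Section Algorithm2.
Variables (n : nat) (R : finType) (E : {set 'I_n * R})
          (A : {set 'I_n} -> {set 'I_n * R}).

(* An arrival order is a permutation s of 'I_n : the vertex arriving in round
   i+1 (rounds are numbered 1..n) is s i. *)

Definition Lle (s : {perm 'I_n}) (l : nat) : {set 'I_n} := [set s i | i : 'I_n & i < l].

Definition Mround (s : {perm 'I_n}) (l : nat) : {set 'I_n * R} := A (Lle s l).

(* {e^{(l)}}: the set of edges of M^{(l)} incident to the vertex arriving in
   round l (empty if none / if l is not a round). *)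
Definition tent (s : {perm 'I_n}) (l : nat) : {set 'I_n * R} :=
  [set e in Mround s l | [exists i : 'I_n, (i.+1 == l) && (e.1 == s i)]].

Definition Tge (s : {perm 'I_n}) (l : nat) : {set 'I_n * R} := \bigcup_(l <= k < n.+1) tent s k.

Fixpoint Acc (s : {perm 'I_n}) (k : nat) : {set 'I_n * R} :=
  match k with
  | 0 => set0
  | k'.+1 =>
      Acc s k' :|:
        (if (uphalf n <= k'.+1) && is_matching E (Acc s k' :|: tent s k'.+1)
         then tent s k'.+1 else set0)
  end.

Definition acc_in (s : {perm 'I_n}) (k : nat) : {set 'I_n * R} :=
  match k with
  | 0 => set0
  | k'.+1 =>
      if (uphalf n <= k'.+1) && is_matching E (Acc s k' :|: tent s k'.+1)
      then tent s k'.+1 else set0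
  end.

Definition ALGge (s : {perm 'I_n}) (l : nat) : {set 'I_n * R} := \bigcup_(l <= k < n.+1) acc_in s k.

End Algorithm2.

(* Main.v *)
Require Import Defs.
From HB Require Import structures.
From mathcomp Require Import all_boot all_order all_algebra all_fingroup.
From mathcomp Require Import lra.
Import Order.TTheory GRing.Theory Num.Theory.

Lemma marg_anti (F : realFieldType) (X : finType) (E : {set X}) (v : {set X} -> F) :
  (forall S1 S2 : {set X}, S1 \subset S2 -> S2 \subset E -> (v S1 <= v S2)%R) ->
  (forall S1 S2 : {set X}, S1 \subset E -> S2 \subset E ->
     (v (S1 :|: S2) + v (S1 :&: S2) <= v S1 + v S2)%R) ->
  forall Z Y W : {set X}, Z \subset E -> Y \subset W -> W \subset E ->
  (vmarg v Z W <= vmarg v Z Y)%R.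
Proof.
move=> mono sub Z Y W ZE YW WE; rewrite /vmarg.
have YE : Y \subset E by apply: subset_trans WE.
have ZYE : Z :|: Y \subset E by rewrite subUset ZE YE.
have h := sub _ _ ZYE WE.
rewrite -setUA (setUidPr YW) in h.
have h2 : (v Y <= v ((Z :|: Y) :&: W))%R.
  apply: mono; last by apply: subset_trans (subsetIr _ _) WE.
  by rewrite subsetI subsetUr YW.
lra.
Qed.

Lemma marg_bigcup (F : realFieldType) (X : finType) (E : {set X}) (v : {set X} -> F) :
  (forall S1 S2 : {set X}, S1 \subset S2 -> S2 \subset E -> (v S1 <= v S2)%R) ->
  (forall S1 S2 : {set X}, S1 \subset E -> S2 \subset E ->
     (v (S1 :|: S2) + v (S1 :&: S2) <= v S1 + v S2)%R) ->
  forall (I : finType) (P : pred I) (B : I -> {set X}) (T : {set X}),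
  T \subset E -> (forall i, B i \subset E) ->
  (vmarg v (\bigcup_(i | P i) B i) T <= \sum_(i | P i) vmarg v (B i) T)%R.
Proof.
move=> mono sub I P B T TE BE.
suff [] : (\bigcup_(i | P i) B i \subset E) /\
  (vmarg v (\bigcup_(i | P i) B i) T <= \sum_(i | P i) vmarg v (B i) T)%R by [].
refine (@big_rec2 {set X} F (fun Y s => Y \subset E /\ (vmarg v Y T <= s)%R) set0 (@setU X) 0%R +%R _ I (index_enum I) P B (fun i => vmarg v (B i) T) _).
  by rewrite sub0set /vmarg set0U subrr.
move=> i Y s _ [YE hY]; split; first by rewrite subUset BE YE.
have YTE : Y :|: T \subset E by rewrite subUset YE TE.
have h := @marg_anti _ _ _ _ mono sub _ _ _ (BE i) (subsetUr Y T) YTE.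
move: h hY; rewrite /vmarg -setUA; lra.
Qed.

Lemma tperm_set (T : finType) (X : {set T}) x u :
  x \in X -> u \in X -> [set tperm x u y | y in X] = X.
Proof.
move=> xX uX; apply/eqP; rewrite eqEcard card_imset ?leqnn ?andbT; last exact: perm_inj.
apply/subsetP => _ /imsetP[y yX ->]; by case: tpermP => // ->.
Qed.

Lemma card_lt (n l : nat) : (l <= n)%N -> #|[set i : 'I_n | (i < l)%N]| = l.
Proof.
move=> ln; rewrite -sum1_card.
rewrite (eq_bigl (fun i : 'I_n => (i < l)%N)); last by move=> i; rewrite inE.
by rewrite (big_ord_narrow ln) sum1_card card_ord.
Qed.

Lemma bigcup_seq_sub (T : finType) (r : seq nat) (F : nat -> {set T}) (U : {set T}) :
  (forall k, F k \subset U) -> \bigcup_(k <- r) F k \subset U.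
Proof.
move=> h; elim: r => [|k r IH]; first by rewrite big_nil sub0set.
by rewrite big_cons subUset h IH.
Qed.

Lemma bigcup_seq_mono (T : finType) (r : seq nat) (F G : nat -> {set T}) :
  (forall k, F k \subset G k) -> \bigcup_(k <- r) F k \subset \bigcup_(k <- r) G k.
Proof.
move=> h; elim: r => [|k r IH]; first by rewrite !big_nil.
by rewrite !big_cons setUSS.
Qed.

Lemma final (F : realFieldType) (Sv Sg Gs X N L : F) :
  (0 < N)%R -> (0 < L)%R -> (Sg <= Sv)%R -> (X <= Gs)%R -> (Gs * N = Sg * L)%R ->
  (L^-1 * X <= Sv / N)%R.
Proof.
move=> Np Lp h1 h2 h3.
have -> : (Sv / N = L^-1 * (Sv * L / N))%R.
  by rewrite mulrA mulrCA mulVf ?gt_eqF // mulr1.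
apply: ler_wpM2l; first by rewrite invr_ge0 ltW.
apply: le_trans h2 _.
rewrite ler_pdivlMr // h3 ler_wpM2r //; exact: ltW.
Qed.

Theorem mainTheorem11 (F : realFieldType) (n : nat) (R : finType)
  (E : {set 'I_n * R}) (v : {set 'I_n * R} -> F)
  (A : {set 'I_n} -> {set 'I_n * R}) (alpha : F) :
  (forall S : {set 'I_n * R}, S \subset E -> (0 <= v S)%R) ->
  (forall S1 S2 : {set 'I_n * R}, S1 \subset S2 -> S2 \subset E -> (v S1 <= v S2)%R) ->
  (forall S1 S2 : {set 'I_n * R}, S1 \subset E -> S2 \subset E ->
     (v (S1 :|: S2) + v (S1 :&: S2) <= v S1 + v S2)%R) ->
  (0 < alpha)%R -> (alpha <= 1)%R ->
  (forall L' : {set 'I_n}, is_matching_in E L' (A L') /\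
     forall M : {set 'I_n * R}, is_matching_in E L' M -> (alpha * v M <= v (A L'))%R) ->
  forall (l : nat), (uphalf n <= l)%N -> (l <= n)%N ->
  forall (S : {set 'I_n}) (T0 : {set 'I_n * R}),
  let Omega := [set s : {perm 'I_n} |
                  (Lle s l == S) && (Tge A s l.+1 == T0)] in
  Omega != set0 ->
  ((\sum_(s in Omega) vmarg v (tent A s l) (ALGge E A s l.+1))
     / (#|Omega|%:R)
   >= (l%:R)^-1 * (v (A S) - v T0))%R.
Proof.
move=> v0 mono sub _ _ hA l _ ln S T0.
have AE : forall L', A L' \subset E.
  by move=> L'; case: (hA L') => /andP[/andP[]].
have tentE : forall s k, tent A s k \subset E.
  move=> s k; apply: subset_trans (AE (Lle s k)).
  by apply/subsetP => e; rewrite inE => /andP[].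
have TgeE : forall s k, Tge A s k \subset E.
  by move=> s k; rewrite /Tge; apply: bigcup_seq_sub.
case: l ln => [|l'] ln Omega One.
  rewrite invr0 mul0r; apply: divr_ge0 => //; apply: sumr_ge0 => s _.
  have -> : tent A s 0 = set0.
    by apply/setP => e; rewrite !inE; apply/andP => -[_ /existsP[i]].
  by rewrite /vmarg set0U subrr.
pose il : 'I_n := Ordinal ln.
pose M := A S.
pose eu u := [set e in M | e.1 == u].
pose g u := vmarg v (eu u) T0.
have OmP : forall s, s \in Omega -> Lle s l'.+1 = S /\ Tge A s l'.+2 = T0.
  by move=> s; rewrite inE => /andP[/eqP -> /eqP ->].
have T0E : T0 \subset E by case/set0Pn: One => s /OmP [_ <-]; exact: TgeE.
have euE : forall u, eu u \subset E.
  move=> u; apply: subset_trans (AE S).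
  by apply/subsetP => e; rewrite inE => /andP[].
have tent_eq : forall s, s \in Omega -> tent A s l'.+1 = eu (s il).
  move=> s /OmP [hL _]; apply/setP => e; rewrite !inE /Mround hL; congr (_ && _).
  apply/idP/idP => [/existsP[i /andP[/eqP hi /eqP ->]]|/eqP ->]; last first.
    by apply/existsP; exists il; rewrite /= !eqxx.
  by apply/eqP; congr (s _); apply: val_inj; case: hi.
have ALG_sub : forall s, s \in Omega -> ALGge E A s l'.+2 \subset T0.
  move=> s /OmP [_ hT]; rewrite -hT /ALGge /Tge; apply: bigcup_seq_mono => -[|k] /=.
    exact: sub0set.
  by case: ifP => _; rewrite ?sub0set.
have step1 : (\sum_(s in Omega) g (s il) <=
     \sum_(s in Omega) vmarg v (tent A s l'.+1) (ALGge E A s l'.+2))%R.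
  apply: ler_sum => s sO; rewrite tent_eq //.
  exact: (@marg_anti _ _ _ _ mono sub _ _ _ (euE _) (ALG_sub s sO) T0E).
have AS : forall e, e \in M -> e.1 \in S.
  move=> e eM; case: (hA S) => /andP[_ /forallP h] _.
  by move/implyP: (h e) => /(_ eM).
have step2 : (v M - v T0 <= \sum_(u in S) g u)%R.
  pose U := \bigcup_(u in S) eu u.
  have MU : M \subset U.
    apply/subsetP => e eM; apply/bigcupP; exists e.1; first exact: AS.
    by rewrite inE eM eqxx.
  have UE : U \subset E by apply/bigcupsP => u _.
  have h1 : (v M <= v (U :|: T0))%R.
    by apply: mono; [apply: subset_trans MU (subsetUl _ _) | rewrite subUset UE T0E].
  have h2 := @marg_bigcup _ _ _ _ mono sub _ (fun u => u \in S) eu T0 T0E euE.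
  move: h2; rewrite /vmarg -/U; lra.
have cardS : #|S| = l'.+1.
  case/set0Pn: One => s0 /OmP[<- _]; rewrite /Lle card_imset ?card_lt //; exact: perm_inj.
have key : forall s u, s \in Omega -> u \in S ->
    ((s * tperm (s il) u)%g \in Omega) && (s il \in S).
  move=> s u sO uS; have [hL hT] := OmP s sO.
  have xS : s il \in S by rewrite -hL /Lle; apply: imset_f; rewrite inE /=.
  rewrite xS andbT.
  have LleE : forall k, (l'.+1 <= k)%N -> Lle (s * tperm (s il) u)%g k = Lle s k.
    move=> k hk.
    have subk : S \subset Lle s k.
      rewrite -hL; apply/subsetP => _ /imsetP[i hi ->]; apply: imset_f.
      by rewrite inE in hi; rewrite inE; exact: leq_trans hi hk.
    rewrite /Lle.
    transitivity [set tperm (s il) u y | y in [set s i | i : 'I_n & (i < k)%N]].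
      by rewrite -imset_comp; apply: eq_imset => i; rewrite /= permM.
    by apply: tperm_set; apply: (subsetP subk).
  have notS : forall i : 'I_n, (l'.+1 <= i)%N -> s i \notin S.
    move=> i hi; rewrite -hL; apply/imsetP => -[j]; rewrite inE => hj /perm_inj eij.
    by move: hj; rewrite -eij ltnNge hi.
  rewrite inE LleE // hL eqxx /=; apply/eqP; rewrite -hT /Tge.
  apply: eq_big_nat => k /andP[hk _].
  rewrite /tent /Mround LleE ?(ltnW hk) //; apply/setP => e; rewrite !inE.
  congr (_ && _); apply: eq_existsb => i.
  case hik: (i.+1 == k) => //=.
  have hi : (l'.+1 <= i)%N by move/eqP: hik hk => <-.
  have nS := notS i hi.
  rewrite permM tpermD //; apply/eqP => ex; move: nS; by rewrite -ex ?xS ?uS.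
pose f (p : {perm 'I_n} * 'I_n) := ((p.1 * tperm (p.1 il) p.2)%g, p.1 il).
have fK : forall p, f (f p) = p.
  case=> s u; rewrite /f /= permM tpermL; congr (_, _).
  by rewrite tpermC -mulgA tperm2 mulg1.
pose D (p : {perm 'I_n} * 'I_n) := (p.1 \in Omega) && (p.2 \in S).
have Dinv : forall p, D (f p) = D p.
  have h : forall p, D p -> D (f p) by case=> s u /andP[sO uS]; exact: key.
  by move=> p; apply/idP/idP => [/h|/h //]; rewrite fK.
have avg : ((\sum_(u in S) g u) *+ #|Omega| =
            (\sum_(s in Omega) g (s il)) *+ l'.+1)%R.
  rewrite -sumr_const -cardS -sumrMnl -[in RHS](eq_bigr _ (fun s _ => sumr_const _ _)).
  rewrite !pair_big_dep (reindex_inj (can_inj fK)).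
  apply: eq_big => [p|p _]; first exact: Dinv.
  by [].
move: step1 step2 avg.
move=> h1 h2 h3.
have Npos : (0 < #|Omega|%:R :> F)%R.
  by rewrite ltr0n; case/set0Pn: One => s sO; apply/card_gt0P; exists s.
have Lpos : (0 < l'.+1%:R :> F)%R by rewrite ltr0n.
refine (@final _ _ _ _ _ _ _ Npos Lpos h1 h2 _).
by rewrite !mulr_natr.
Qed.
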